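(* Let $(X\cup Y,\mathbf{d})$ be a finite metric space, $\epsilon \in (0,\frac{1}{2})$ and $S \subseteq Y$. For each $x\in X$ let $N_x$ be an $\epsilon \cdot \mathbf{d}(x, S)$-net of $B_Y(\pi_S(x), \mathbf{d}(x,S)/\epsilon)$, and for $x\in X$, $y\in Y$ define $\widehat{\mathbf{d}}_S(x,y) = \min_{u\in N_x} \mathbf{d}(x,u) + \mathbf{d}(u,y)$. Then for all $x\in X$ and $y\in Y$, \[ \mathbf{d}(x,y) \le \widehat{\mathbf{d}}_S(x,y) \le (1+4\epsilon) \cdot \mathbf{d}(x,y) + 2 \epsilon \cdot \mathbf{d}(x,S). \]
   Context: For $S\subseteq X\cup Y$, $x$ and $r>0$, $B_S(x,r)=\{y\in S:\mathbf{d}(x,y)\le r\}$. $\pi_S(x)$ denotes a point of $S$ closest to $x$ and $\mathbf{d}(x,S)=\mathbf{d}(x,\pi_S(x))$. For $\rho>0$, a $\rho$-net of a set $B$ is a subset $N\subseteq B$ whose distinct points are pairwise at distance at least $\rho$ and such that every point of $B$ is within distance $\rho$ of some point of $N$. The net $N_x$ need not contain $\pi_S(x)$. *)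

(* Defs.v *)
From mathcomp Require Import all_boot all_order all_algebra.
Set Implicit Arguments. Unset Strict Implicit. Unset Printing Implicit Defensive.
Import Order.TTheory GRing.Theory Num.Theory.
Local Open Scope ring_scope.

Definition is_metric (R : realFieldType) (T : finType) (d : T -> T -> R) : Prop :=
  [/\ forall x y, 0 <= d x y,
      forall x y, d x y = 0 <-> x = y,
      forall x y, d x y = d y x &
      forall x y z, d x z <= d x y + d y z].

Definition ball_in (R : realFieldType) (T : finType) (d : T -> T -> R)
  (S : {set T}) (x : T) (r : R) : {set T} :=
  [set y in S | d x y <= r].

Definition is_closest_map (R : realFieldType) (T : finType) (d : T -> T -> R)
  (S : {set T}) (pi : T -> T) : Prop :=
  forall x, pi x \in S /\ (forall s, s \in S -> d x (pi x) <= d x s).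

Definition is_net (R : realFieldType) (T : finType) (d : T -> T -> R)
  (rho : R) (B N : {set T}) : Prop :=
  [/\ N \subset B,
      forall u v, u \in N -> v \in N -> u != v -> rho <= d u v &
      forall b, b \in B -> exists2 u, u \in N & d b u <= rho].

(* minimum of f over a finite set A (0 if A is empty; only used for nonempty A) *)
Definition set_min (R : realFieldType) (T : finType) (A : {set T}) (f : T -> R) : R :=
  match enum A with
  | [::] => 0
  | u0 :: _ => \big[Num.min/f u0]_(u in A) f u
  end.

(* Main.v *)
Require Import Defs.
From mathcomp Require Import all_boot all_order all_algebra.
From mathcomp Require Import lra.
Import Order.TTheory GRing.Theory Num.Theory.
Set Implicit Arguments. Unset Strict Implicit.
Local Open Scope ring_scope.

Lemma bigmin_seq_le (R : realFieldType) (T : eqType) (r : seq T) (P : pred T)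
  (f : T -> R) x0 u : u \in r -> P u ->
  \big[Num.min/x0]_(i <- r | P i) f i <= f u.
Proof.
elim: r => [//|a r IH]; rewrite inE big_cons => /orP [/eqP <- Pu|ur Pu].
  by rewrite Pu ge_min lexx.
case: (P a); last exact: IH.
by rewrite ge_min IH ?orbT.
Qed.

Lemma set_min_le (R : realFieldType) (T : finType) (A : {set T}) (f : T -> R) u :
  u \in A -> set_min A f <= f u.
Proof.
move=> uA; rewrite /set_min; case E: (enum A) => [|u0 s].
  by have := mem_enum A u; rewrite E uA.
exact: bigmin_seq_le (mem_index_enum u) uA.
Qed.

Lemma set_min_ge (R : realFieldType) (T : finType) (A : {set T}) (f : T -> R) c :
  A != set0 -> (forall u, u \in A -> c <= f u) -> c <= set_min A f.
Proof.
move=> /set0Pn [w wA] H; rewrite /set_min; case E: (enum A) => [|u0 s].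
  by have := mem_enum A w; rewrite E wA.
apply: (big_ind (fun v => c <= v)) => //.
- by apply: H; rewrite -mem_enum E inE eqxx.
- by move=> a b ha hb; rewrite le_min ha hb.
Qed.

Theorem lemma3p2 (R : realFieldType) (T : finType) (d : T -> T -> R)
  (X Y S : {set T}) (eps : R) (pi : T -> T) (N : T -> {set T}) :
  is_metric d ->
  X :|: Y = [set: T] ->
  0 < eps -> eps < 1 / 2 ->
  S \subset Y -> S != set0 ->
  is_closest_map d S pi ->
  (forall x, x \in X ->
     is_net d (eps * d x (pi x)) (ball_in d Y (pi x) (d x (pi x) / eps)) (N x)) ->
  forall x y, x \in X -> y \in Y ->
    let dhat := set_min (N x) (fun u => d x u + d u y) in
    d x y <= dhat /\
    dhat <= (1 + 4 * eps) * d x y + 2 * eps * d x (pi x).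
Proof.
move=> [d0 dE dC dT] _ e0 e12 SY _ cl hN x y xX yY dhat.
have [sS _] := cl x.
set s := pi x in sS *; set D := d x s.
have [Nsub Nsep Ncov] := hN x xX.
have D0 : 0 <= D by exact: d0.
have sB : s \in ball_in d Y s (D / eps).
  by rewrite inE (subsetP SY _ sS) (proj2 (dE s s) erefl) divr_ge0 // ltW.
have [u0 u0N su0] := Ncov s sB.
split.
  apply: set_min_ge; first by apply/set0Pn; exists u0.
  by move=> u _; apply: dT.
case yB: (y \in ball_in d Y s (D / eps)).
  have [u uN yu] := Ncov y yB.
  rewrite /dhat; apply: le_trans (set_min_le (fun u => d x u + d u y) uN) _ => /=.
  have := dT x y u; rewrite (dC u y).
  have := d0 x y; have := mulr_ge0 (ltW e0) (d0 x y); move=> *; rewrite /D /s; lra.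
move: yB; rewrite inE yY /= => /negbT; rewrite -ltNge ltr_pdivrMr // => hlt.
rewrite /dhat; apply: le_trans (set_min_le (fun u => d x u + d u y) u0N) _ => /=.
have h1 := dT x s u0. have h2 := dT u0 s y. have h3 := dT s x y.
rewrite -/D (dC s x) -/D (dC u0 s) in h1 h2 h3 *.
rewrite /D /s in h1 h2 h3 hlt *. have p1 : 0 <= eps * (d x (pi x) + d x y - d (pi x) y) by apply: mulr_ge0; lra. have p2 : 0 <= (1/2 - eps) * d x (pi x) by apply: mulr_ge0; [lra | exact: d0]. have := d0 x (pi x). have := dT (pi x) (pi x) y. move=> *. lra.
Qed.
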